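(* For every positive integer $k$, $\mathrm{mad}_{\delta^+}(C(k,1))=\mathrm{mad}_{\delta^0}(C(k,1))=k$.
   Context: $C(k_1,k_2)$ is the union of two internally disjoint directed paths of lengths $k_1$ and $k_2$ with the same initial and terminal vertices. A subdivision of a digraph $F$ is obtained by replacing each arc $(x,y)$ by a directed $(x,y)$-path, internally disjoint with new internal vertices. $\delta^+(D)$ is the minimum out-degree, $\delta^-(D)$ the minimum in-degree, and $\delta^0(D)=\min\{\delta^+(D),\delta^-(D)\}$. For a digraph parameter $\gamma$, $\mathrm{mad}_\gamma(F)$ is the least integer $c$ such that every digraph $D$ with $\gamma(D)\ge c$ contains a subdivision of $F$ as a subdigraph. *)

(* Defs.v *)
From mathcomp Require Import all_boot.
Set Implicit Arguments. Unset Strict Implicit. Unset Printing Implicit Defensive.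

(* A (finite) digraph: a finite vertex set with an arc relation; loopless,
   no parallel arcs (arcs form a relation); digons are allowed. *)
Record digraph := Digraph {
  dV :> finType;
  darc : rel dV;
  darc_irr : irreflexive darc }.

Definition outdeg (D : digraph) (v : D) : nat := #|[set w | darc v w]|.
Definition indeg (D : digraph) (v : D) : nat := #|[set w | darc w v]|.

(* minimum out-/in-degree; for the empty digraph the value is 0 *)
Definition delta_plus (D : digraph) : nat :=
  \big[minn/#|dV D|]_(v : dV D) outdeg v.
Definition delta_minus (D : digraph) : nat :=
  \big[minn/#|dV D|]_(v : dV D) indeg v.
Definition delta_zero (D : digraph) : nat := minn (delta_plus D) (delta_minus D).

(* D contains a subdivision of the digraph F = (FV, FA) as a subdigraph:
   an injective map f of branch vertices, and for each arc (u,v) of F a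
   directed (f u, f v)-path in D with internal vertex sequence P u v; the
   internal vertices avoid the branch vertices and are pairwise disjoint
   between different arcs. *)
Definition contains_subdivision (FV : finType) (FA : rel FV) (D : digraph) : Prop :=
  exists (f : FV -> dV D) (P : FV -> FV -> seq (dV D)),
    [/\ injective f,
        (forall u v, FA u v ->
           [/\ path (@darc D) (f u) (rcons (P u v) (f v)),
               uniq (P u v) &
               forall w, w \in P u v -> w \notin codom f]) &
        (forall u v u' v', FA u v -> FA u' v' -> (u, v) <> (u', v') ->
           forall w, w \in P u v -> w \notin P u' v')].

(* C(k1,k2): vertices 'I_(k1+k2); 0 = common initial vertex, 1 = common
   terminal vertex; 2..k1 internal vertices of the first path (length k1),
   k1+1..k1+k2-1 internal vertices of the second path (length k2). *)
Definition C_path1 (k1 : nat) : seq nat := 0 :: iota 2 k1.-1 ++ [:: 1].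
Definition C_path2 (k1 k2 : nat) : seq nat := 0 :: iota k1.+1 k2.-1 ++ [:: 1].
Definition arcs_of (s : seq nat) : seq (nat * nat) := zip s (behead s).

Definition CV (k1 k2 : nat) : finType := 'I_(k1 + k2).
Definition CA (k1 k2 : nat) : rel (CV k1 k2) :=
  fun u v => ((val u, val v) \in arcs_of (C_path1 k1))
          || ((val u, val v) \in arcs_of (C_path2 k1 k2)).

(* c is mad_gamma(F): the least integer c such that every digraph D with
   gamma(D) >= c contains a subdivision of F (gamma is nat-valued, so it
   suffices to range over nat). *)
Definition mad_prop (gamma : digraph -> nat) (FV : finType) (FA : rel FV) (c : nat) : Prop :=
  forall D : digraph, c <= gamma D -> contains_subdivision FA D.

Definition is_mad (gamma : digraph -> nat) (FV : finType) (FA : rel FV) (c : nat) : Prop :=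
  mad_prop gamma FA c /\ forall c', mad_prop gamma FA c' -> c <= c'.

(* Main.v *)
Require Import Defs.
From mathcomp Require Import all_boot zify.
Set Implicit Arguments. Unset Strict Implicit. Unset Printing Implicit Defensive.

Lemma arcs_ofP s a b : (a, b) \in arcs_of s ->
  exists i, [/\ i.+1 < size s, a = nth 0 s i & b = nth 0 s i.+1].
Proof.
elim: s => [|x s IH] //. case: s IH => [|y s] IH //.
rewrite /arcs_of /= in_cons => /orP [/eqP [-> ->]|H]; first by exists 0.
have [i [Hi Ha Hb]] := IH H. by exists i.+1.
Qed.

Lemma nth_Cpath1 k i : 0 < k -> i <= k ->
  nth 0 (C_path1 k) i = if i == 0 then 0 else if i < k then i.+1 else 1.
Proof.
case: i => [|i] //= Hk Hi. rewrite nth_cat size_iota.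
case: ltnP => h.
  rewrite nth_iota //. have -> : i.+1 < k by lia. lia.
have -> : i - k.-1 = 0 by lia. have -> : (i.+1 < k) = false by lia. by [].
Qed.

Lemma size_Cpath1 k : 0 < k -> size (C_path1 k) = k.+1.
Proof. move=> Hk; rewrite /C_path1 /= size_cat size_iota /=; lia. Qed.

Lemma CA_char k (a b : CV k 1) : 0 < k -> CA a b ->
  [\/ nat_of_ord a = 0 /\ nat_of_ord b = 1,
      exists i, [/\ i.+1 < k, nat_of_ord a = (if i == 0 then 0 else i.+1) & nat_of_ord b = i.+2]
    | [/\ 1 < k, nat_of_ord a = k & nat_of_ord b = 1]].
Proof.
move=> Hk; rewrite /CA => /orP [H|H]; last first.
  move: H; rewrite /C_path2 /arcs_of /= inE => /eqP [-> ->]. by constructor 1.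
have [i [Hi Ha Hb]] := arcs_ofP H.
rewrite size_Cpath1 // in Hi.
rewrite nth_Cpath1 // in Ha; last lia.
rewrite nth_Cpath1 // in Hb.
case: (ltnP i.+1 k) => h.
  apply: Or32; exists i; split => //; rewrite ?Hb ?h //.
  rewrite Ha; have -> : i < k by lia. by [].
have ek : i.+1 = k by lia.
have hb : nat_of_ord b = 1 by rewrite Hb (_ : (i.+1 < k) = false) //; lia.
case: i Ha ek {Hi h Hb} => [|i] Ha ek.
  by constructor 1; rewrite Ha.
rewrite (_ : (i.+1 < k) = true) in Ha; last lia.
constructor 3; split => //; [clear -ek; lia | rewrite Ha /=; clear -ek; lia].
Qed.

Lemma path_drop_nth (T : Type) (e : rel T) x0 x s n :
  path e x s -> n <= size s -> path e (nth x0 (x :: s) n) (drop n s).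
Proof.
elim: s x n => [|z s IH] x [|n] //= /andP [_ hp] hn.
exact: IH.
Qed.

Lemma CA_k k (a b : CV k 1) : 0 < k -> CA a b -> nat_of_ord b = 1 -> nat_of_ord a != 0 -> nat_of_ord a = k.
Proof.
move=> Hk Hab hb ha.
case: (CA_char Hk Hab) => [[ha' hb']|[i [hi ha' hb']]|[hk ha' hb']] //.
- by rewrite ha' in ha.
- by rewrite hb' in hb.
Qed.

Lemma build (D : digraph) k (y : D) (u : seq D) : 0 < k -> path (@darc D) y u ->
  uniq (y :: u) -> k <= size u -> darc y (last y u) -> contains_subdivision (@CA k 1) D.
Proof.
move=> Hk Hp Hu Hs Hl.
set L := size u. set W := y :: u.
pose pos (n : nat) := if n == 0 then 0 else if n == 1 then L else n.-1.
have posL : forall x : CV k 1, pos x <= L.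
  move=> x; move: (ltn_ord x) Hs; rewrite /pos; case: (nat_of_ord x) => [|[|x']] /=; lia.
pose f := fun x : CV k 1 => nth y W (pos x).
pose P := fun (a b : CV k 1) =>
  if (nat_of_ord b == 1) && (nat_of_ord a != 0) then drop k (take L W) else [::].
have nthW : forall i j, i <= L -> j <= L -> (nth y W i == nth y W j) = (i == j).
  by move=> i j hi hj; rewrite nth_uniq.
have codomP' : forall w, w \in drop k (take L W) -> w \notin codom f.
  move=> w /(nthP y) [t ht <-]; apply/codomP => [[x hx]].
  rewrite size_drop size_take /W /= ltnSn in ht.
  rewrite nth_drop nth_take in hx; last lia.
  move/eqP: hx; rewrite /f nthW ?posL //; last lia.
  move/eqP; move: (ltn_ord x) ht Hs; rewrite /pos; case: (nat_of_ord x) => [|[|x']] /=; lia.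
exists f, P; split.
- move=> a b /eqP; rewrite /f nthW ?posL // => /eqP h; apply: val_inj.
  move: h (ltn_ord a) (ltn_ord b) Hs; rewrite /pos /=.
  case: (nat_of_ord a) => [|[|a']]; case: (nat_of_ord b) => [|[|b']] /=; lia.
- move=> a b Hab.
  have HP : forall w, w \in P a b -> w \in drop k (take L W) by rewrite /P; case: ifP.
  split.
  + case: (CA_char Hk Hab) => [[ha hb]|[i [hi ha hb]]|[hk ha hb]].
    * rewrite /P /f /pos ha hb /= andbT -[X in nth y W X]/((size W).-1) nth_last.
      exact: Hl.
    * rewrite /P /f /pos hb ha /=.
      have -> : (if (if i == 0 then 0 else i.+1) == 0 then 0
                 else if (if i == 0 then 0 else i.+1) == 1 then L
                 else (if i == 0 then 0 else i.+1).-1) = i by clear; case: i.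
      rewrite andbT. apply: (pathP y Hp). lia.
    * rewrite /P /f /pos hb ha /=.
      have -> : (k == 0) = false by lia.
      have -> : (k == 1) = false by lia.
      rewrite /= -drop_rcons; last by rewrite size_take /W /= ltnSn; lia.
      rewrite -take_nth /W /=; last by [].
      rewrite take_oversize //.
      have [k' ek] : exists k', k = k'.+1 by exists k.-1; lia.
      rewrite ek /=. apply: path_drop_nth => //. rewrite -/L. lia.
  + rewrite /P; case: ifP => // _. exact/drop_uniq/take_uniq.
  + move=> w /HP; exact: codomP'.
- move=> a b a' b' Hab Hab' Hne w; rewrite /P.
  case: ifP => [/andP [/eqP hb ha]|] //; case: ifP => [/andP [/eqP hb' ha']|] //.
  exfalso; apply: Hne.
  have e1 := CA_k Hk Hab hb ha. have e2 := CA_k Hk Hab' hb' ha'.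
  by congr pair; apply: val_inj; rewrite /= ?e1 ?e2 ?hb ?hb'.
Qed.

Lemma sorted_rcons2 (T : Type) (e : rel T) s a b :
  sorted e (rcons s a) -> e a b -> sorted e (rcons (rcons s a) b).
Proof.
case: s => [|c s] /=; first by move=> _ ->.
by rewrite !rcons_path last_rcons => -> ->.
Qed.

Lemma finish (D : digraph) k (q : seq D) (y : D) : 0 < k -> k <= outdeg y ->
  sorted (@darc D) (rcons q y) -> uniq (rcons q y) -> (forall z, darc y z -> z \in q) ->
  exists y' u, [/\ path (@darc D) y' u, uniq (y' :: u), k <= size u & darc y' (last y' u)].
Proof.
move=> Hk Hdeg hs hu hN.
have hq : sorted (@darc D) q.
  move: hs; rewrite -cats1 => /(take_sorted (size q)); by rewrite take_size_cat.
move: hu; rewrite rcons_uniq => /andP [yq uq].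
have [w0 hw0] : exists w0, darc y w0.
  have : 0 < #|[set w | darc y w]| by apply: leq_trans Hdeg.
  by move/card_gt0P => [w]; rewrite inE => hw; exists w.
have hhas : has (darc y) q by apply/hasP; exists w0; [exact: hN|].
set i := find (darc y) q.
set t := drop i q.
have Nt : forall w, darc y w -> w \in t.
  move=> w hw; have := hN w hw; rewrite -(cat_take_drop i q) mem_cat => /orP [h|//].
  have : has (darc y) (take i q) by apply/hasP; exists w.
  by rewrite has_take // ltnn.
have [z hz hiz] : exists2 z, darc y z & k.-1 <= index z t.
  case: (boolP [exists z, darc y z && (k.-1 <= index z t)]) => [/existsP [z /andP [h1 h2]]|/existsPn H].
    by exists z.
  exfalso.
  have : #|[set w | darc y w]| <= k.-1.
    have h2 := card_size (take k.-1 t).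
    have h3 : size (take k.-1 t) <= k.-1 by rewrite size_take; case: ifP => //; lia.
    suff h1 : #|[set w | darc y w]| <= #|take k.-1 t| by lia.
    apply: subset_leq_card; apply/subsetP => w; rewrite inE => hw.
    rewrite in_take ?Nt //. by move: (H w); rewrite hw /= -ltnNge.
  move: Hdeg; rewrite /outdeg. lia.
set j := index z t. set u := take j.+1 t.
have zt : z \in t by exact: Nt.
have hj : j < size t by rewrite index_mem.
have su : size u = j.+1 by rewrite size_takel.
have hsu : sorted (@darc D) u by apply: take_sorted; apply: drop_sorted.
exists y, u; split.
- case Hu : u su hsu => [|a u'] //= _ ->; rewrite andbT.
  have : nth y u 0 = a by rewrite Hu.
  rewrite /u nth_take // /t nth_drop addn0 => <-. exact: nth_find.
- rewrite /= take_uniq ?drop_uniq // andbT.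
  apply/negP => /mem_take /mem_drop; by rewrite (negbTE yq).
- rewrite su; lia.
- rewrite -nth_last su /= /u nth_take // /t. rewrite -/t. by rewrite nth_index.
Qed.

Lemma ext (D : digraph) k : 0 < k -> (forall v : D, k <= outdeg v) -> forall n (q : seq D) (y : D),
  #|D| - size q <= n -> sorted (@darc D) (rcons q y) -> uniq (rcons q y) ->
  exists y' u, [/\ path (@darc D) y' u, uniq (y' :: u), k <= size u & darc y' (last y' u)].
Proof.
move=> Hk Hdeg n; elim: n => [|n IH] q y hn hs hu.
all: have hsz : size (rcons q y) <= #|D| by rewrite -(card_uniqP hu); exact: max_card.
all: rewrite size_rcons in hsz.
  exfalso; lia.
case: (boolP [exists z, darc y z && (z \notin rcons q y)]) => [/existsP [z /andP [h1 h2]]|/existsPn H].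
  apply: (IH (rcons q y) z).
  - rewrite size_rcons; lia.
  - exact: sorted_rcons2.
  - by rewrite rcons_uniq h2 hu.
apply: (finish Hk (Hdeg y) hs hu) => z hz.
move: (H z); rewrite hz /= negbK mem_rcons inE => /orP [/eqP ezy|//].
by move: hz; rewrite ezy (darc_irr).
Qed.

Lemma bigmin_le (I : eqType) (r : seq I) (F : I -> nat) x v :
  v \in r -> \big[minn/x]_(i <- r) F i <= F v.
Proof.
elim: r => [|a r IH] //; rewrite big_cons inE => /orP [/eqP ->|h].
  exact: geq_minl.
exact: leq_trans (geq_minr _ _) (IH h).
Qed.

Lemma bigmin_idx (I : Type) (r : seq I) (F : I -> nat) x :
  \big[minn/x]_(i <- r) F i <= x.
Proof.
elim: r => [|a r IH]; first by rewrite big_nil.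
by rewrite big_cons; exact: leq_trans (geq_minr _ _) IH.
Qed.

Lemma le_bigmin (I : Type) (r : seq I) (F : I -> nat) x c :
  c <= x -> (forall i, c <= F i) -> c <= \big[minn/x]_(i <- r) F i.
Proof.
move=> hx hF; elim: r => [|a r IH]; first by rewrite big_nil.
by rewrite big_cons leq_min hF IH.
Qed.

Lemma Kirr k : irreflexive (fun u v : 'I_k => u != v).
Proof. by move=> x; rewrite eqxx. Qed.

Definition Kdig k : digraph := @Digraph 'I_k (fun u v : 'I_k => u != v) (@Kirr k).

Lemma Kdig_out k c (v : Kdig k) : c < k -> c <= outdeg v.
Proof.
move=> hc; rewrite /outdeg /=.
have -> : [set w : 'I_k | v != w] = [set~ v] by apply/setP => w; rewrite !inE eq_sym.
rewrite cardsC1 card_ord; lia.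
Qed.

Lemma Kdig_in k c (v : Kdig k) : c < k -> c <= indeg v.
Proof.
move=> hc; rewrite /indeg /=.
have -> : [set w : 'I_k | w != v] = [set~ v] by apply/setP => w; rewrite !inE.
rewrite cardsC1 card_ord; lia.
Qed.

Lemma Kdig_no k : ~ contains_subdivision (@CA k 1) (Kdig k).
Proof.
move=> [f [P [finj _ _]]].
have := leq_card f finj. rewrite /CV /= !card_ord. lia.
Qed.

Lemma mad_plus k : 0 < k -> mad_prop delta_plus (@CA k 1) k.
Proof.
move=> hk D hD.
have hkD : k <= #|D| by apply: leq_trans hD (bigmin_idx _ _ _).
have hdeg : forall v : D, k <= outdeg v.
  move=> v; apply: leq_trans hD _; apply: bigmin_le; exact: mem_index_enum.
have /card_gt0P [y0 _] : 0 < #|D| by lia.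
have [y [u [h1 h2 h3 h4]]] := ext hk hdeg (leqnn _) (q := [::]) (y := y0) (isT : sorted _ [:: y0]) (isT : uniq [:: y0]).
exact: build hk h1 h2 h3 h4.
Qed.

Theorem proposition26 (k : nat) (hk : 0 < k) :
  is_mad delta_plus (@CA k 1) k /\ is_mad delta_zero (@CA k 1) k.
Proof.
split; split.
- exact: mad_plus.
- move=> c hc; rewrite leqNgt; apply/negP => hck; apply: (@Kdig_no k); apply: hc.
  apply: le_bigmin; [rewrite card_ord; lia | move=> v; exact: Kdig_out].
- move=> D; rewrite /delta_zero leq_min => /andP [hD _]; exact: mad_plus.
- move=> c hc; rewrite leqNgt; apply/negP => hck; apply: (@Kdig_no k); apply: hc.
  rewrite /delta_zero leq_min; apply/andP; split.
  + apply: le_bigmin; [rewrite card_ord; lia | move=> v; exact: Kdig_out].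
  + apply: le_bigmin; [rewrite card_ord; lia | move=> v; exact: Kdig_in].
Qed.
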